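(* Let $\widetilde{\mathbb{F}}$ be a field. There exists an SD-map $f:\mathbb{F}_5\to\widetilde{\mathbb{F}}$ if and only if $\widetilde{\mathbb{F}}$ contains a primitive fourth root of unity.
   Context: $\mathbb{F}_5=\mathbb{Z}/5\mathbb{Z}$. A map $f:\mathbb{F}\to\widetilde{\mathbb{F}}$ between fields is called an SD-map if for all $x\neq y$ in $\mathbb{F}$ one has $f(x)\neq f(y)$ and \[ f\left(\frac{x+y}{x-y}\right)=\frac{f(x)+f(y)}{f(x)-f(y)}. \] *)

(* Defs.v *)
From HB Require Import structures.
From mathcomp Require Import all_boot all_order all_algebra.
Set Implicit Arguments. Unset Strict Implicit. Unset Printing Implicit Defensive.
Import GRing.Theory.
Local Open Scope ring_scope.

Definition SD_map (K : fieldType) (f : 'F_5 -> K) : Prop :=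
  forall x y : 'F_5, x != y ->
    f x != f y /\ f ((x + y) / (x - y)) = (f x + f y) / (f x - f y).

(* Main.v *)
Require Import Defs.
From mathcomp Require Import all_boot all_order all_algebra.
From mathcomp Require Import ring.
Local Open Scope ring_scope.
Import GRing.Theory.

Lemma divhelp (K : fieldType) (u a b : K) : a != b -> u * a - u * b = a + b -> u = (a + b) / (a - b).
Proof. move=> h e; by rewrite -e -mulrBr mulfK // subr_eq0. Qed.

Lemma conv (K : fieldType) (z : K) : 4.-primitive_root z -> exists f : 'F_5 -> K, SD_map f.
Proof.
move=> pz.
have z4 : z ^+ 4 = 1 by apply: prim_expr_order.
have z2n1 : z ^+ 2 != 1 by rewrite -(prim_order_dvd pz).
have zz : z * z = -1.
  have : (z ^+ 2) ^+ 2 == 1 by rewrite -exprM z4.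
  by rewrite sqrf_eq1 (negbTE z2n1) /= expr2 => /eqP.
have m1 : (-1 : K) != 1.
  by apply: contra z2n1; rewrite expr2 zz.
have n10 : (1 : K) != 0 := oner_neq0 K.
have nm10 : (-1 : K) != 0 by rewrite oppr_eq0.
have z0 : z != 0 by apply: contra nm10 => /eqP z0; rewrite -zz z0 mul0r.
have mz0 : - z != 0 by rewrite oppr_eq0.
have z1 : z != 1 by apply: contra m1 => /eqP e; rewrite -zz e mul1r.
have zm1 : z != -1 by apply: contra m1 => /eqP e; rewrite -zz e mulN1r opprK.
have mz1 : - z != 1 by apply: contra zm1 => /eqP <-; rewrite opprK.
have mzm1 : - z != -1 by apply: contra z1 => /eqP e; rewrite -[z]opprK e opprK.
have zmz : z != - z.
  apply: contra m1 => /eqP e; by rewrite -zz {1}e mulNr zz opprK.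
have zmz' : - z != z by rewrite eq_sym.
have zNz : - z * z = 1 by rewrite mulNr zz opprK.
have zzN : z * - z = 1 by rewrite mulrN zz opprK.
have NzNz : - z * - z = -1 by rewrite mulrNN zz.
pose f (x : 'F_5) : K := match val x with 0 => 0 | 1 => 1 | 2 => z | 3 => - z | _ => -1 end.
exists f => x y.
move: x y => [[|[|[|[|[|?]]]]] ?] [[|[|[|[|[|?]]]]] ?] //= _; rewrite /f /=;
  (split; [ rewrite ?(eq_sym 0) ?(eq_sym 1 (-1)) ?(eq_sym 1 z) ?(eq_sym 1 (-z)) ?(eq_sym (-1) z) ?(eq_sym (-1) (-z)) //
          | apply: divhelp; [ rewrite ?(eq_sym 0) ?(eq_sym 1 (-1)) ?(eq_sym 1 z) ?(eq_sym 1 (-z)) ?(eq_sym (-1) z) ?(eq_sym (-1) (-z)) //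
            | rewrite ?zz ?zNz ?zzN ?NzNz ?mulr1 ?mul1r ?mulr0 ?mul0r ?mulrN1 ?mulN1r ?opprK; ring ]]).
Qed.
Lemma undiv (K : fieldType) (u a b : K) : a != b -> u = (a + b) / (a - b) -> u * (a - b) = a + b.
Proof. by move=> h ->; rewrite divfK // subr_eq0. Qed.

Lemma fwd (K : fieldType) (f : 'F_5 -> K) : SD_map f -> exists z : K, 4.-primitive_root z.
Proof.
move=> hf.
have SD x y q : x != y -> (x + y) / (x - y) = q -> f x != f y /\ f q * (f x - f y) = f x + f y.
  move=> nxy <-; have [h1 h2] := hf x y nxy; split => //; exact: undiv.
have [A1 A] := SD 1 0 1 isT ltac:(by apply/eqP).
have [B1 B] := SD 2 0 1 isT ltac:(by apply/eqP).
have [C1 _] := SD 1 2 2 isT ltac:(by apply/eqP).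
have [_ D] := SD 0 1 4 isT ltac:(by apply/eqP).
have [G1 _] := SD 4 1 0 isT ltac:(by apply/eqP).
have [E1 E] := SD 2 3 0 isT ltac:(by apply/eqP).
have [_ F] := SD 2 1 3 isT ltac:(by apply/eqP).
set c := f 0 in A1 A B1 B D E.
have f1 : f 1 = 1.
  have : (f 1 - 1) * (f 1 - f 2) = 0.
    have -> : (f 1 - 1) * (f 1 - f 2) = f 1 * (f 1 - c) - f 1 * (f 2 - c) - (f 1 - f 2) by ring.
    by rewrite A B; ring.
  by move/eqP; rewrite mulf_eq0 !subr_eq0 (negbTE C1) orbF => /eqP.
rewrite f1 in A A1 D G1.
have c2 : c + c = 0.
  have : 1 * (1 - c) - (1 + c) = 0 by rewrite A subrr.
  move/eqP; rewrite -oppr_eq0 => /eqP <-; ring.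
have two : (2 : K) != 0.
  apply/negP => /eqP t.
  have t' : (1 + 1 : K) = 0 by exact: t.
  have m11 : (-1 : K) = 1 by apply/eqP; rewrite eq_sym -addr_eq0 t'.
  have cm : c - 1 != 0 by rewrite subr_eq0 eq_sym.
  have : f 4 = 1.
    apply: (mulIf cm); by rewrite D mul1r m11.
  by move/eqP; rewrite (negbTE G1).
have c0 : c = 0.
  apply: (mulIf two); rewrite mul0r -c2; ring.
rewrite c0 in D E.
have f4 : f 4 = -1.
  by move: D; rewrite sub0r add0r mulrN => /eqP; rewrite eqr_oppLR => /eqP <-; ring.
have f3 : f 3 = - f 2.
  by move: E; rewrite mul0r => /esym /eqP; rewrite addr_eq0 => /eqP ->; rewrite opprK.
rewrite f3 f1 in F.
have a2 : f 2 * f 2 = -1.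
  apply/eqP; rewrite -subr_eq0; apply/eqP.
  have -> : f 2 * f 2 - -1 = - (- f 2 * (f 2 - 1) - (f 2 + 1)) by ring.
  by rewrite F subrr oppr0.
exists (f 2).
set a := f 2 in a2 *.
have m1 : (-1 : K) != 1.
  apply: contra two => /eqP e; rewrite -[2]/(1 + 1 : K) -{1}e; apply/eqP; ring.
have a1 : a != 1 by apply: contra m1 => /eqP e; rewrite -a2 e mul1r.
have am1 : a != -1 by apply: contra m1 => /eqP e; rewrite -a2 e mulN1r opprK.
rewrite /primitive_root_of_unity; apply/forallP => -[[|[|[|[|?]]]] ?] //=;
  rewrite unity_rootE ?expr1 ?expr2 ?exprS ?expr1 ?expr0 ?mulr1 ?a2.
- by rewrite (negbTE a1).
- by rewrite (negbTE m1).
- by apply/eqP/negbTE; rewrite mulrN1 eqr_oppLR.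
- rewrite mulrN1 mulrN a2 opprK. have e1 : ((1:K) == 1) = true by apply/eqP. by rewrite e1.
Qed.

Theorem proposition2p3 (K : fieldType) :
  (exists f : 'F_5 -> K, SD_map f) <-> (exists z : K, 4.-primitive_root z).
Proof.
split; [by move=> [f hf]; apply: fwd hf | by move=> [z hz]; apply: conv hz].
Qed.
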